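(* Let $p\in(0,1)$ and let $(\lambda_n)_{n\ge1}$ be a sequence with $\lambda_1=1$ and $0<\lambda_n\le\lambda_{n-1}$ for all $n>1$. Let $r_1,r_2,\dots$ be $\{0,1\}$-valued random variables with $\Pr(r_1=1)=p$ and, for every $n\ge2$, $\Pr(r_n=1\mid r_1,\dots,r_{n-1})=\lambda_n p+(1-\lambda_n)\bar p_{n-1}$, where $\bar p_m=\frac1m\sum_{i=1}^m r_i$. Define $\hat r_1=r_1$, $\hat r_i=\frac{r_i-(1-\lambda_i)\bar p_{i-1}}{\lambda_i}$ for $i\ge2$, and for weights $\omega_1,\dots,\omega_n>0$ let $\hat p_n=\frac{\sum_{i=1}^n\omega_i\hat r_i}{\sum_{i=1}^n\omega_i}$. Let $\epsilon>0$ and $\alpha\in(0,1)$. If \[\Big(\sum_{i=1}^n\omega_i\Big)^2\ge\frac{1}{2\epsilon^2}\log\frac{2}{\alpha}\sum_{i=1}^n\Big(\frac{\omega_i}{\lambda_i}\Big)^2,\] then $\Pr(|\hat p_n-p|\le\epsilon)\ge1-\alpha$.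
   Context: $\log$ denotes the natural logarithm. *)

(* Defs.v *)
From HB Require Import structures.
From mathcomp Require Import all_boot all_order all_algebra.
From mathcomp Require Import all_classical all_reals all_analysis.
Set Implicit Arguments. Unset Strict Implicit. Unset Printing Implicit Defensive.
Import Order.TTheory GRing.Theory Num.Theory.
Local Open Scope ring_scope.
Local Open Scope classical_set_scope.

(* Indices are 1-based as in the paper; r 0, lambda 0, omega 0 are unused. *)

Definition pbar {T : Type} {R : realType} (r : nat -> T -> R) (m : nat) (x : T) : R :=
  (m%:R)^-1 * \sum_(1 <= i < m.+1) r i x.

Definition cyl {T : Type} {R : realType} (r : nat -> T -> R) (m : nat) (s : nat -> bool)
  : set T := [set x | forall i, (1 <= i <= m)%N -> r i x = (s i)%:R].

Definition sbar {R : realType} (s : nat -> bool) (m : nat) : R :=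
  (m%:R)^-1 * \sum_(1 <= i < m.+1) ((s i)%:R : R).

(* Pr(r_n = 1 | r_1,...,r_{n-1}) = lambda_n p + (1 - lambda_n) pbar_{n-1}, n >= 2,
   written out for the discrete conditioning variables (r_1,...,r_{n-1}):
   for every value s of (r_1,...,r_{n-1}),
   P(r_1..r_{n-1} = s, r_n = 1) = (lambda_n p + (1-lambda_n) sbar s) P(r_1..r_{n-1} = s). *)
Definition cond_law {d : measure_display} {T : measurableType d} {R : realType}
  (P : probability T R) (r : nat -> T -> R) (p : R) (lambda : nat -> R) : Prop :=
  forall (n : nat) (s : nat -> bool), (2 <= n)%N ->
    P (cyl r n.-1 s `&` [set x | r n x = 1]) =
    ((lambda n * p + (1 - lambda n) * sbar s n.-1)%:E * P (cyl r n.-1 s))%E.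

Definition rhat {T : Type} {R : realType} (r : nat -> T -> R) (lambda : nat -> R)
  (i : nat) (x : T) : R :=
  if i == 1%N then r 1%N x
  else (r i x - (1 - lambda i) * pbar r i.-1 x) / lambda i.

Definition phat {T : Type} {R : realType} (r : nat -> T -> R) (lambda omega : nat -> R)
  (n : nat) (x : T) : R :=
  (\sum_(1 <= i < n.+1) omega i * rhat r lambda i x) / (\sum_(1 <= i < n.+1) omega i).

(* Main.v *)
Require Import Defs.
From HB Require Import structures.
From mathcomp Require Import all_boot all_order all_algebra.
From mathcomp Require Import all_classical all_reals all_analysis.
From mathcomp Require Import ring lra.
Import Order.TTheory GRing.Theory Num.Theory.
Import numFieldNormedType.Exports.
Local Open Scope ring_scope.
Local Open Scope classical_set_scope.

Section Calc.
Variable R : realType.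
Lemma deriv_tool (f df : R -> R) :
  (forall x : R, is_derive x 1 f (df x)) ->
  [/\ forall x, derivable f x 1, forall x, f^`() x = df x & continuous f].
Proof.
move=> H; split.
- by move=> x; case: (H x).
- by move=> x; rewrite derive1E; apply: derive_val.
- move=> x; apply: differentiable_continuous; apply/derivable1_diffP.
  by case: (H x).
Qed.

Lemma nondecr_tool (f df : R -> R) (u : R) :
  (forall x : R, is_derive x 1 f (df x)) ->
  (forall x : R, 0 <= x <= u -> 0 <= df x) -> 0 <= u -> f 0 <= f u.
Proof.
move=> H dpos u0.
have [d1 d2 d3] := deriv_tool _ _ H.
apply: (@ger0_derive1_ndecr _ f 0 u) => //.
- move=> x; rewrite in_itv /= => /andP[h1 h2]; rewrite d2; apply: dpos.
  by rewrite (ltW h1) (ltW h2).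
- by apply: continuous_subspaceT.
Qed.
Variable q : R.
Hypothesis q01 : 0 <= q <= 1.
Definition D (x : R) := 1 - q + q * expR x.
Lemma D_gt0 x : 0 < D x.
Proof.
rewrite /D; have e0 := expR_gt0 x; case/andP: q01 => q0 q1.
have [->|qn1] := eqVneq q 1; first by lra.
have : q < 1 by rewrite lt_neqAle qn1.
move=> ?; have : 0 <= q * expR x by rewrite mulr_ge0 // ltW.
lra.
Qed.
Lemma dD (x : R) : is_derive x 1 D (q * expR x).
Proof.
rewrite /D.
have -> : (fun x => 1 - q + q * expR x) = cst (1 - q) + (q *: (expR : R -> R)).
  by apply/funext => y /=.
apply: is_derive_eq.
by rewrite add0r.
Qed.
Definition g (x : R) := x / 4 + q - q * expR x / D x.
Definition dg (x : R) := 4^-1 - q * (1 - q) * expR x / (D x) ^+ 2.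
Lemma dgP (x : R) : is_derive x 1 g (dg x).
Proof.

have -> : g = ((fun x => 4^-1 * x) + cst q) - (q *: (expR * (fun y => (D y)^-1))).
  apply/funext => y /=; rewrite /g; rewrite !fctE /=. by rewrite (mulrC 4^-1) -mulrA.
have Dn0 : D x != 0 by rewrite gt_eqF // D_gt0.
have := dD x => hD.
apply: is_derive_eq.
have sE : forall a b : R, a *: b = a * b by [].
rewrite !sE /dg; move: Dn0; rewrite /D => Dn0.
by field.
Qed.

Definition f (x : R) := x ^+ 2 / 8 + q * x - ln (D x).
Lemma dfP (x : R) : is_derive x 1 f (g x).
Proof.
have -> : f = ((fun x => 8^-1 * x ^+ 2) + (q *: id)) - ((@ln R) \o D).
  by apply/funext => y /=; rewrite /f !fctE /= (mulrC 8^-1).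
have hD := dD x.
have hl := is_derive1_ln (D_gt0 x).
apply: is_derive_eq.
have sE : forall a b : R, a *: b = a * b by [].
rewrite !sE /g.
have Dn0 : D x != 0 by rewrite gt_eqF // D_gt0.
move: Dn0; rewrite /D => Dn0.
by field.
Qed.

Lemma dg_ge0 x : 0 <= dg x.
Proof.
have Dn0 : D x != 0 by rewrite gt_eqF // D_gt0.
have -> : dg x = (1 - q - q * expR x) ^+ 2 / (4 * D x ^+ 2).
  by rewrite /dg; move: Dn0; rewrite /D => Dn0; field.
by rewrite divr_ge0 // ?sqr_ge0 // mulr_ge0 // sqr_ge0.
Qed.

Lemma g_ge0 x : 0 <= x -> 0 <= g x.
Proof.
move=> x0.
have := @nondecr_tool g dg x dgP (fun y _ => dg_ge0 y) x0.
have -> // : g 0 = 0.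
by rewrite /g /D expR0 mulr1 subrK divr1 mul0r add0r subrr.
Qed.

Lemma f_ge0 x : 0 <= x -> 0 <= f x.
Proof.
move=> x0.
have := @nondecr_tool f g x dfP (fun y hy => g_ge0 y (proj1 (andP hy))) x0.
have -> // : f 0 = 0.
rewrite /f /D expR0 mulr1 subrK ln1.
by rewrite expr0n /= mul0r mulr0 !addr0 subr0.
Qed.

Lemma hoeff_pos u : 0 <= u ->
  q * expR (u * (1 - q)) + (1 - q) * expR (- (u * q)) <= expR (u ^+ 2 / 8).
Proof.
move=> u0.
have := f_ge0 u u0; rewrite /f subr_ge0 => h.
have h2 : D u <= expR (u ^+ 2 / 8 + q * u).
  by rewrite -(lnK (D_gt0 u)) ler_expR.
have -> : q * expR (u * (1 - q)) + (1 - q) * expR (- (u * q)) = expR (- (u * q)) * D u.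
  have -> : expR (u * (1 - q)) = expR (- (u * q)) * expR u by rewrite -expRD; congr expR; ring.
  rewrite /D; ring.
apply: le_trans (ler_wpM2l (ltW (expR_gt0 _)) h2) _.
by rewrite -expRD; rewrite le_eqVlt; apply/orP; left; apply/eqP; congr expR; ring.
Qed.
End Calc.

Lemma hoeffding_lemma (R : realType) (q u : R) : 0 <= q <= 1 ->
  q * expR (u * (1 - q)) + (1 - q) * expR (- (u * q)) <= expR (u ^+ 2 / 8).
Proof.
move=> q01.
have [u0|u0] := leP 0 u; first exact: hoeff_pos.
have q01' : 0 <= 1 - q <= 1 by case/andP: q01 => ? ?; apply/andP; split; lra.
have nu0 : 0 <= - u by rewrite oppr_ge0 ltW.
have := @hoeff_pos R (1 - q) q01' (- u) nu0.
rewrite sqrrN (_ : 1 - (1 - q) = q); last by ring.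
have -> : - u * q = - (u * q) by ring.
have -> : - (- u * (1 - q)) = u * (1 - q) by ring.
by rewrite addrC.
Qed.


Definition upd (s : nat -> bool) (j : nat) (b : bool) : nat -> bool :=
  fun i => if i == j then b else s i.

Fixpoint strings (k : nat) : seq (nat -> bool) :=
  if k is k'.+1 then
    flatten [seq [:: upd s k'.+1 false; upd s k'.+1 true] | s <- strings k']
  else [:: fun _ => false].


Lemma pbar_agree (R : realType) (T1 T2 : Type) (r1 : nat -> T1 -> R) (r2 : nat -> T2 -> R)
  k x y : (forall i, (1 <= i <= k)%N -> r1 i x = r2 i y) -> pbar r1 k x = pbar r2 k y.
Proof.
move=> h; rewrite /pbar; congr (_ * _); apply: eq_big_nat => i /andP[h1 h2].
by apply: h; rewrite h1 -ltnS.
Qed.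

Lemma rhat_agree (R : realType) (T1 T2 : Type) (r1 : nat -> T1 -> R) (r2 : nat -> T2 -> R)
  lambda k x y : (forall i, (1 <= i <= k)%N -> r1 i x = r2 i y) ->
  forall i, (1 <= i <= k)%N -> rhat r1 lambda i x = rhat r2 lambda i y.
Proof.
move=> h i /andP[i1 ik]; rewrite /rhat.
case: (boolP (i == 1%N)) => [/eqP ei|i1'].
  by subst i; apply: h; rewrite /= (leq_trans i1 ik).
rewrite h ?i1 ?ik // (@pbar_agree _ _ _ r1 r2 i.-1 x y) // => j /andP[j1 j2].
by apply: h; rewrite j1 (leq_trans j2) // (leq_trans _ ik) // leq_pred.
Qed.

Lemma phat_agree (R : realType) (T1 T2 : Type) (r1 : nat -> T1 -> R) (r2 : nat -> T2 -> R)
  lambda omega n x y : (forall i, (1 <= i <= n)%N -> r1 i x = r2 i y) ->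
  phat r1 lambda omega n x = phat r2 lambda omega n y.
Proof.
move=> h; rewrite /phat; congr (_ / _); apply: eq_big_nat => i /andP[h1 h2].
by rewrite (@rhat_agree _ _ _ r1 r2 lambda n x y) // h1 -ltnS.
Qed.

Definition rs (R : realType) (i : nat) (s : nat -> bool) : R := (s i)%:R.

Section Main.
Context (d : measure_display) (T : measurableType d) (R : realType)
  (P : probability T R) (p : R) (lambda : nat -> R) (r : nat -> T -> R).
Hypothesis mr : forall i, measurable_fun setT (r i).
Hypothesis r01 : forall i x, r i x = 0 \/ r i x = 1.
Hypothesis p01 : 0 < p < 1.
Hypothesis lam1 : lambda 1%N = 1.
Hypothesis lamdec : forall k, (1 < k)%N -> 0 < lambda k <= lambda k.-1.
Hypothesis Pr1 : P [set x | r 1%N x = 1] = p%:E.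
Hypothesis cl : cond_law P r p lambda.
Variable omega : nat -> R.

Definition mu (A : set T) : R := fine (P A).

Lemma muE A : measurable A -> P A = (mu A)%:E.
Proof. by move=> mA; rewrite /mu fineK // fin_num_measure. Qed.

Lemma mu_ge0 A : 0 <= mu A.
Proof. by rewrite /mu fine_ge0 // measure_ge0. Qed.

Lemma muT : mu setT = 1.
Proof. by rewrite /mu probability_setT. Qed.

Lemma mu0 : mu set0 = 0.
Proof. by rewrite /mu measure0. Qed.

Lemma meas_eq i (c : R) : measurable [set x | r i x = c].
Proof.
have := @mr i measurableT _ (measurable_set1 c).
by rewrite setTI.
Qed.

Lemma cyl0 s : cyl r 0 s = setT.
Proof. by apply/seteqP; split => x // _ i /andP[h1 h2]; move: (leq_trans h1 h2). Qed.

Lemma cylS k s : cyl r k.+1 s = cyl r k s `&` [set x | r k.+1 x = (s k.+1)%:R].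
Proof.
apply/seteqP; split => x /=.
- move=> h; split; last by apply: h; rewrite leqnn andbT.
  by move=> i /andP[h1 h2]; apply: h; rewrite h1 (leq_trans h2).
- move=> [h1 h2] i /andP[i1 i2]; rewrite leq_eqVlt in i2.
  case/orP: i2 => [/eqP ->|i2] //; apply: h1; by rewrite i1.
Qed.

Lemma cyl_meas k s : measurable (cyl r k s).
Proof.
elim: k => [|k IH]; first by rewrite cyl0.
by rewrite cylS; apply: measurableI => //; apply: meas_eq.
Qed.

Lemma cyl_ext k s t : (forall i, (1 <= i <= k)%N -> s i = t i) -> cyl r k s = cyl r k t.
Proof.
move=> h; apply/seteqP; split => x /= hx i hi; rewrite -?h // ?hx //.
by rewrite h // hx.
Qed.

Lemma cyl_upd k s b :
  cyl r k.+1 (upd s k.+1 b) = cyl r k s `&` [set x | r k.+1 x = b%:R].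
Proof.
rewrite cylS /upd eqxx; congr (_ `&` _); apply: cyl_ext => i /andP[_ h].
by rewrite ifF //; apply/negbTE; rewrite neq_ltn ltnS h.
Qed.

Lemma mu_split A j : measurable A ->
  mu A = mu (A `&` [set x | r j x = false%:R]) + mu (A `&` [set x | r j x = true%:R]).
Proof.
move=> mA.
have m0 := meas_eq j (false%:R); have m1 := meas_eq j (true%:R).
have : P A = P (A `&` [set x | r j x = false%:R]) + P (A `&` [set x | r j x = true%:R]).
  rewrite -measureU; first congr (P _).
  - apply/seteqP; split => x /=; last by case=> -[].
    move=> hA; case: (r01 j x) => h; [left|right]; split => //; by rewrite h.
  - exact: measurableI.
  - exact: measurableI.
  - apply/seteqP; split => x //= [[_ h1] [_ h2]]; move: h1; rewrite h2 /=.
    by move/eqP; rewrite oner_eq0.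
rewrite !muE //; try exact: measurableI.
by move=> [].
Qed.

Lemma partition E k : measurable E ->
  mu E = \sum_(s <- strings k) mu (E `&` cyl r k s).
Proof.
move=> mE; elim: k => [|k IH]; first by rewrite /= big_seq1 cyl0 setIT.
rewrite IH /= big_flatten big_map; apply: eq_bigr => s _.
rewrite big_cons big_seq1 !cyl_upd !setIA.
apply: mu_split; apply: measurableI => //; exact: cyl_meas.
Qed.

Lemma lam_pos k : (1 <= k)%N -> 0 < lambda k /\ lambda k <= 1.
Proof.
elim: k => // k IH _.
case: k IH => [|k] IH; first by rewrite lam1 ltr01 lexx.
have /andP[h1 h2] := lamdec k.+2 isT; have [_ h3] := IH isT.
by split => //; apply: le_trans h2 h3.
Qed.

Definition qq (k : nat) (s : nat -> bool) : R :=
  if k == 0%N then p else lambda k.+1 * p + (1 - lambda k.+1) * sbar s k.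

Lemma sbar01 s k : 0 <= sbar (R := R) s k <= 1.
Proof.
rewrite /sbar; case: k => [|k]; first by rewrite invr0 mul0r lexx ler01.
have hs : 0 <= \sum_(1 <= i < k.+2) ((s i)%:R : R) by apply: sumr_ge0 => i _; exact: ler0n.
have hs2 : \sum_(1 <= i < k.+2) ((s i)%:R : R) <= k.+1%:R.
  apply: le_trans (_ : \sum_(1 <= i < k.+2) (1 : R) <= _).
    by apply: ler_sum => i _; case: (s i); rewrite ?lexx ?ler01.
  by rewrite sumr_const_nat subn1 /=.
have kp : 0 < (k.+1%:R : R) by rewrite ltr0n.
apply/andP; split; first by rewrite mulr_ge0 // invr_ge0 ltW.
by rewrite ler_pdivrMl // mulr1.
Qed.

Lemma qq01 k s : 0 <= qq k s <= 1.
Proof.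
rewrite /qq; case: eqP => _; first by case/andP: p01 => ? ?; apply/andP; split; lra.
have [l0 l1] := lam_pos k.+1 isT.
have /andP[s0 s1] := sbar01 s k.
have /andP[p0 p1] := p01.
have h1 : 0 <= lambda k.+1 * p by rewrite mulr_ge0 // ltW.
have h2 : lambda k.+1 * p <= lambda k.+1 by rewrite ler_piMr // ?ltW.
have h3 : 0 <= (1 - lambda k.+1) * sbar s k by rewrite mulr_ge0 // subr_ge0.
have h4 : (1 - lambda k.+1) * sbar s k <= 1 - lambda k.+1 by rewrite ler_piMr // subr_ge0.
apply/andP; split; lra.
Qed.

Lemma rhat_step k s b :
  rhat (@rs R) lambda k.+1 (upd s k.+1 b) - p = (b%:R - qq k s) / lambda k.+1.
Proof.
rewrite /rhat /qq; case: k => [|k] /=.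
  by rewrite lam1 divr1 /rs /upd eqxx.
have [l0 _] := lam_pos k.+2 isT.
have -> : pbar (@rs R) k.+1 (upd s k.+2 b) = sbar s k.+1.
  rewrite (@pbar_agree _ _ _ (@rs R) (@rs R) k.+1 (upd s k.+2 b) s) //.
  move=> i /andP[_ h]; rewrite /rs /upd ifF //; apply/negbTE.
  by rewrite neq_ltn ltnS h.
rewrite /rs /upd eqxx.
have ln0 : lambda k.+2 != 0 by rewrite gt_eqF.
by field.
Qed.

Lemma m_step1 k s :
  mu (cyl r k s `&` [set x | r k.+1 x = true%:R]) = qq k s * mu (cyl r k s).
Proof.
rewrite /qq; case: k => [|k] /=.
  by rewrite cyl0 setTI muT mulr1 /mu Pr1.
have := cl k.+2 s isT; rewrite /= => h.
rewrite /mu h (muE _ (cyl_meas _ _)) -EFinM //.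
Qed.

Lemma m_step0 k s :
  mu (cyl r k s `&` [set x | r k.+1 x = false%:R]) = (1 - qq k s) * mu (cyl r k s).
Proof.
have := mu_split _ k.+1 (cyl_meas k s); rewrite m_step1 => h.
by rewrite mulrBl mul1r {1}h; ring.
Qed.

Definition S k s := \sum_(1 <= i < k.+1) omega i * (rhat (@rs R) lambda i s - p).
Definition C k := \sum_(1 <= i < k.+1) (omega i / lambda i) ^+ 2.

Lemma S_upd k s b : S k (upd s k.+1 b) = S k s.
Proof.
rewrite /S; apply: eq_big_nat => i /andP[i1 i2].
rewrite (@rhat_agree _ _ _ (@rs R) (@rs R) lambda k (upd s k.+1 b) s) //.
  move=> j /andP[_ h]; rewrite /rs /upd ifF //; apply/negbTE.
  by rewrite neq_ltn ltnS h.
by rewrite i1 -ltnS.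
Qed.

Lemma S_step k s b :
  S k.+1 (upd s k.+1 b) = S k s + omega k.+1 * ((b%:R - qq k s) / lambda k.+1).
Proof.
rewrite {1}/S big_nat_recr //= -/(S k (upd s k.+1 b)) S_upd rhat_step //.
Qed.

Lemma mgf h k :
  \sum_(s <- strings k) expR (h * S k s) * mu (cyl r k s) <= expR (h ^+ 2 * C k / 8).
Proof.
elim: k => [|k IH].
  rewrite /= big_seq1 cyl0 muT /S /C !big_geq //.
  by rewrite mulr0 mulr0 mul0r expR0 mulr1.
rewrite /= big_flatten big_map.
set c := omega k.+1 / lambda k.+1.
apply: le_trans (_ : \sum_(s <- strings k) expR (h * S k s) * mu (cyl r k s) *
   expR ((h * c) ^+ 2 / 8) <= _).
  apply: ler_sum => s _.
  rewrite big_cons big_seq1 !S_step !cyl_upd m_step0 m_step1.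
  have hl := @hoeffding_lemma R (qq k s) (h * c) (qq01 k s).
  have e0 : (false%:R : R) = 0 by [].
  have e1 : (true%:R : R) = 1 by [].
  rewrite e0 e1.
  have E1 : forall b : R, expR (h * (S k s + omega k.+1 * ((b - qq k s) / lambda k.+1))) =
      expR (h * S k s) * expR (h * c * (b - qq k s)).
    by move=> b; rewrite -expRD; congr expR; rewrite /c; ring.
  rewrite !E1 [X in X <= _]/=.
  have -> : expR (h * S k s) * expR (h * c * (0 - qq k s)) * ((1 - qq k s) * mu (cyl r k s)) +
    expR (h * S k s) * expR (h * c * (1 - qq k s)) * (qq k s * mu (cyl r k s)) =
    (expR (h * S k s) * mu (cyl r k s)) *
    (qq k s * expR (h * c * (1 - qq k s)) + (1 - qq k s) * expR (- (h * c * qq k s))).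
    have -> : h * c * (0 - qq k s) = - (h * c * qq k s) by ring.
    ring.
  apply: ler_wpM2l => //.
  by rewrite mulr_ge0 // ?mu_ge0 // ltW // expR_gt0.
rewrite -mulr_suml.
apply: le_trans (ler_wpM2r (ltW (expR_gt0 _)) IH) _.
have hC : C k.+1 = C k + c ^+ 2 by rewrite /C big_nat_recr.
rewrite -expRD hC.
rewrite le_eqVlt; apply/orP; left; apply/eqP; congr expR; ring.
Qed.

Lemma meas_le (f g : T -> R) : measurable_fun setT f -> measurable_fun setT g ->
  measurable [set x | f x <= g x].
Proof.
move=> mf mg.
have := @measurable_realfun.measurable_fun_ler _ _ _ setT f g mf mg measurableT [set true] I.
rewrite setTI.
have -> // : [set x | f x <= g x] = (fun x => f x <= g x) @^-1` [set true].
by apply/seteqP; split => x /=.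
Qed.

Lemma pbar_meas k : measurable_fun setT (pbar r k).
Proof.
apply: measurable_realfun.measurable_funM; first exact: measurable_cst.
by apply: measurable_sum => i; apply: mr.
Qed.

Lemma rhat_meas i : measurable_fun setT (rhat r lambda i).
Proof.
rewrite /rhat; case: (i == 1%N); first exact: mr.
apply: measurable_realfun.measurable_funM; last exact: measurable_cst.
apply: measurable_realfun.measurable_funB; first exact: mr.
apply: measurable_realfun.measurable_funM; first exact: measurable_cst.
exact: pbar_meas.
Qed.

Lemma phat_meas n : measurable_fun setT (phat r lambda omega n).
Proof.
apply: measurable_realfun.measurable_funM; last exact: measurable_cst.
apply: measurable_sum => i.
apply: measurable_realfun.measurable_funM; first exact: measurable_cst.
exact: rhat_meas.
Qed.

Lemma S_phat n s : (0 < \sum_(1 <= i < n.+1) omega i) ->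
  S n s = (\sum_(1 <= i < n.+1) omega i) * (phat (@rs R) lambda omega n s - p).
Proof.
move=> W0; rewrite /S /phat.
under eq_bigr do rewrite mulrBr.
rewrite sumrB -mulr_suml.
have Wn0 : \sum_(1 <= i < n.+1) omega i != 0 by rewrite gt_eqF.
move: Wn0; set W := \sum_(1 <= i < n.+1) omega i; set X := \sum_(_ <= _ < _ ) _.
by move=> Wn0; field.
Qed.

Lemma final n eps alpha :
  (0 < n)%N ->
  (forall i, (1 <= i <= n)%N -> 0 < omega i) ->
  0 < eps -> 0 < alpha < 1 ->
  (\sum_(1 <= i < n.+1) omega i) ^+ 2 >=
    (2 * eps ^+ 2)^-1 * ln (2 / alpha) * \sum_(1 <= i < n.+1) (omega i / lambda i) ^+ 2 ->
  ((1 - alpha)%:E <= P [set x | (`|phat r lambda omega n x - p| <= eps)%R])%E.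
Proof.
move=> n0 om e0 /andP[a0 a1] hyp.
set W := \sum_(1 <= i < n.+1) omega i.
have W0 : 0 < W.
  rewrite /W big_ltn ?ltnS //.
  apply: ltr_wpDr; last by apply: om; rewrite leqnn n0.
  rewrite big_nat_cond; apply: sumr_ge0 => i /andP[/andP[i1 i2] _].
  by apply: ltW; apply: om; rewrite (ltnW i1) -ltnS.
have C0 : 0 < C n.
  rewrite /C big_ltn ?ltnS //.
  apply: ltr_wpDr; last by rewrite lam1 divr1 exprn_gt0 // om // leqnn n0.
  by apply: sumr_ge0 => i _; apply: sqr_ge0.
fold (C n) in hyp.
set G := [set x | `|phat r lambda omega n x - p| <= eps].
have mG : measurable G.
  have -> : G = [set x | phat r lambda omega n x - p <= eps] `&`
                [set x | - eps <= phat r lambda omega n x - p].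
    apply/seteqP; split => x /=; rewrite /G /=.
      by rewrite ler_norml => /andP[h1 h2].
    by move=> [h1 h2]; rewrite ler_norml h1 h2.
  apply: measurableI; apply: meas_le.
  - apply: measurable_realfun.measurable_funB; [exact: phat_meas | exact: measurable_cst].
  - exact: measurable_cst.
  - exact: measurable_cst.
  - apply: measurable_realfun.measurable_funB; [exact: phat_meas | exact: measurable_cst].
set good := fun s => `|phat (@rs R) lambda omega n s - p| <= eps.
have hG : forall s, G `&` cyl r n s = if good s then cyl r n s else set0.
  move=> s.
  have ag : forall x, cyl r n s x ->
      phat r lambda omega n x = phat (@rs R) lambda omega n s.
    by move=> x cx; apply: phat_agree => i hi; apply: cx.
  rewrite /good; case: ifP => hs; apply/seteqP; split => x /=.
  - by case.
  - by move=> cx; split => //; rewrite /G /= ag.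
  - by case=> Gx cx; move: Gx; rewrite /G /= ag // hs.
  - by [].
have muG : mu G = \sum_(s <- strings n) (if good s then mu (cyl r n s) else 0).
  rewrite (partition _ n mG); apply: eq_bigr => s _; rewrite hG.
  by case: (good s); rewrite ?mu0.
have mu1 : 1 = \sum_(s <- strings n) mu (cyl r n s).
  by rewrite -muT (partition _ n measurableT); apply: eq_bigr => s _; rewrite setTI.
set t := eps * W.
set h := 4 * t / C n.
have t0 : 0 < t by rewrite mulr_gt0.
have h0 : 0 <= h by rewrite divr_ge0 // ?ltW // mulr_gt0.
have key : 1 - mu G <= expR (- (h * t)) *
   (\sum_(s <- strings n) expR (h * S n s) * mu (cyl r n s) +
    \sum_(s <- strings n) expR ((- h) * S n s) * mu (cyl r n s)).
  rewrite muG mu1 -sumrB -big_split mulr_sumr /=.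
  apply: ler_sum => s _.
  have m0 := mu_ge0 (cyl r n s).
  case: ifP => hs.
    rewrite subrr; apply: mulr_ge0; first exact/ltW/expR_gt0.
    by rewrite addr_ge0 // mulr_ge0 // ltW // expR_gt0.
  rewrite subr0.
  have -> : expR (- (h * t)) * (expR (h * S n s) * mu (cyl r n s) +
      expR (- h * S n s) * mu (cyl r n s)) =
    (expR (h * (S n s - t)) + expR (h * (- S n s - t))) * mu (cyl r n s).
    have e1 : expR (h * (S n s - t)) = expR (- (h * t)) * expR (h * S n s).
      by rewrite -expRD; congr expR; ring.
    have e2 : expR (h * (- S n s - t)) = expR (- (h * t)) * expR (- h * S n s).
      by rewrite -expRD; congr expR; ring.
    by rewrite e1 e2; ring.
  rewrite -[X in X <= _]mul1r; apply: ler_wpM2r => //.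
  move: hs; rewrite /good => /negbT; rewrite -ltNge => hs.
  have : t < `|S n s|.
    by rewrite S_phat // normrM gtr0_norm // /t -/W mulrC ltr_pM2l.
  rewrite ltr_normr => /orP[hS|hS].
    have : 1 <= expR (h * (S n s - t)).
      apply: le_trans (expR_ge1Dx _); rewrite lerDl mulr_ge0 // subr_ge0 ltW //.
    move=> h1; apply: le_trans h1 _; by rewrite lerDl; apply/ltW/expR_gt0.
  have : 1 <= expR (h * (- S n s - t)).
    apply: le_trans (expR_ge1Dx _); rewrite lerDl mulr_ge0 // subr_ge0 ltW //.
  move=> h1; apply: le_trans h1 _; by rewrite lerDr; apply/ltW/expR_gt0.
have b1 := mgf h n; have b2 := mgf (- h) n; rewrite sqrrN in b2.
have Cn0 : C n != 0 by rewrite gt_eqF.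
have hexp : - (h * t) + h ^+ 2 * C n / 8 = - (2 * t ^+ 2 / C n).
  by rewrite /h; field.
have key2 : 1 - mu G <= 2 * expR (- (2 * t ^+ 2 / C n)).
  apply: le_trans key _.
  rewrite -hexp expRD.
  have := ler_wpM2l (ltW (expR_gt0 (- (h * t)))) (lerD b1 b2).
  move=> hh; apply: le_trans hh _.
  by rewrite le_eqVlt; apply/orP; left; apply/eqP; ring.
have e20 : 0 < 2 * eps ^+ 2 by rewrite mulr_gt0 // exprn_gt0.
have hL : ln (2 / alpha) <= 2 * t ^+ 2 / C n.
  rewrite ler_pdivlMr //.
  have := ler_wpM2l (ltW e20) hyp.
  rewrite mulrA mulrA mulfV ?gt_eqF // mul1r => hh.
  apply: le_trans hh _.
  have ht : t ^+ 2 = eps ^+ 2 * W ^+ 2 by rewrite /t exprMn.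
  by rewrite ht mulrA; apply: lexx.
have hA : expR (- (2 * t ^+ 2 / C n)) <= alpha / 2.
  apply: le_trans (_ : expR (- ln (2 / alpha)) <= _).
    by rewrite ler_expR lerN2.
  rewrite expRN lnK ?invf_div //.
  by rewrite posrE divr_gt0.
have : 1 - mu G <= alpha.
  apply: le_trans key2 _.
  by move: hA; lra.
rewrite (muE _ mG) lee_fin => hh.
lra.
Qed.
End Main.

Theorem theoremA14 (d : measure_display) (T : measurableType d) (R : realType)
  (P : probability T R) (p : R) (lambda : nat -> R) (r : nat -> T -> R)
  (omega : nat -> R) (n : nat) (eps alpha : R) :
  0 < p < 1 ->
  lambda 1%N = 1 ->
  (forall k, (1 < k)%N -> 0 < lambda k <= lambda k.-1) ->
  (forall i, measurable_fun setT (r i)) ->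
  (forall i x, r i x = 0 \/ r i x = 1) ->
  P [set x | r 1%N x = 1] = p%:E ->
  cond_law P r p lambda ->
  (0 < n)%N ->
  (forall i, (1 <= i <= n)%N -> 0 < omega i) ->
  0 < eps -> 0 < alpha < 1 ->
  (\sum_(1 <= i < n.+1) omega i) ^+ 2 >=
    (2 * eps ^+ 2)^-1 * ln (2 / alpha) * \sum_(1 <= i < n.+1) (omega i / lambda i) ^+ 2 ->
  ((1 - alpha)%:E <= P [set x | (`|phat r lambda omega n x - p| <= eps)%R])%E.
Proof.
move=> p01 lam1 lamdec mr r01 Pr1 cl n0 om e0 a01 hyp.
exact: (@final d T R P p lambda r mr r01 p01 lam1 lamdec Pr1 cl omega n eps alpha n0 om e0 a01 hyp).
Qed.
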